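(* Let $f\in\mathcal{R}$ with $f(z)=z+\sum_{n=2}^\infty a_nz^n$, and let $\Gamma_1=-\tfrac12 a_2$, $\Gamma_2=-\tfrac12\left(a_3-\tfrac32 a_2^2\right)$. Then $|\Gamma_1|\le\frac12$ and $|\Gamma_2|\le\frac{5}{12}$, and both bounds are attained by some $f\in\mathcal{R}$.
   Context: $\mathbb{D}$ is the open unit disk; $\mathcal{A}$ is the class of holomorphic $f$ on $\mathbb{D}$ with $f(0)=0$, $f'(0)=1$; $\mathcal{R}=\{f\in\mathcal{A}:\operatorname{Re} f'(z)>0\ \forall z\in\mathbb{D}\}$. $\Gamma_n$ are defined by $\log(f^{-1}(w)/w)=2\sum_{n\ge1}\Gamma_nw^n$. *)

(* Defs.v *)
From Stdlib Require Import Reals.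
From Coquelicot Require Import Coquelicot.
Open Scope R_scope.

Definition in_disk (z : C) : Prop := Cmod z < 1.

Definition holo_on_disk_with_deriv (f f' : C -> C) : Prop :=
  forall z : C, in_disk z -> is_derive (K := C_AbsRing) (V := C_NormedModule) f z (f' z).

Definition in_class_R (f : C -> C) : Prop :=
  exists f' : C -> C,
    holo_on_disk_with_deriv f f' /\ f 0 = 0 /\ f' 0 = 1 /\
    (forall z : C, in_disk z -> 0 < Re (f' z)).

Definition has_coeffs (f : C -> C) (a : nat -> C) : Prop :=
  forall z : C, in_disk z ->
    is_series (V := C_NormedModule)
      (fun n : nat => if (n <? 2)%nat then (0 : C) else Cmult (a n) (pow_n z n))
      (Cminus (f z) z).

Definition Gamma1 (a : nat -> C) : C := Cmult (-(1/2))%R (a 2%nat).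
Definition Gamma2 (a : nat -> C) : C :=
  Cmult (-(1/2))%R (Cminus (a 3%nat) (Cmult (3/2)%R (Cmult (a 2%nat) (a 2%nat)))).

(* Main.v *)
Require Import Defs.
From Stdlib Require Import Reals Lra Lia Psatz ClassicalEpsilon.
From Coquelicot Require Import Coquelicot.
Open Scope R_scope.

Lemma powC (z : C) n : pow_n z n = (z ^ n)%C.
Proof. induction n; simpl; [reflexivity| rewrite IHn; reflexivity]. Qed.

Lemma lim_C (u : nat -> C) l :
  (forall eps, 0 < eps -> exists N, forall n, (N <= n)%nat -> Cmod (u n - l) < eps) ->
  filterlim u eventually (locally l).
Proof.
  intros H P [e He]. destruct (H e (cond_pos e)) as [N HN].
  exists N; intros n Hn. apply He. apply C_NormedModule_mixin_compat1.
  exact (HN n Hn).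
Qed.

Lemma lim_C_inv (u : nat -> C) l : filterlim u eventually (locally l) ->
  forall eps, 0 < eps -> exists N, forall n, (N <= n)%nat -> Cmod (u n - l) < eps.
Proof.
  intros H eps Heps.
  assert (Hs : 0 < sqrt 2) by (apply sqrt_lt_R0; lra).
  set (e := mkposreal (eps / sqrt 2) (Rdiv_lt_0_compat _ _ Heps Hs)).
  destruct (H (ball l e) (locally_ball l e)) as [N HN].
  exists N; intros n Hn.
  pose proof (C_NormedModule_mixin_compat2 l (u n) e (HN n Hn)) as Hc.
  simpl in Hc. replace (sqrt 2 * (eps / sqrt 2)) with eps in Hc by (field; lra).
  exact Hc.
Qed.

Lemma lim_le (u : nat -> C) l w K : filterlim u eventually (locally l) ->
  (exists N, forall n, (N <= n)%nat -> Cmod (u n - w) <= K) -> Cmod (l - w) <= K.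
Proof.
  intros H [N HN].
  destruct (Rle_or_lt (Cmod (l - w)) K) as [h|h]; [exact h|].
  destruct (lim_C_inv u l H (Cmod (l - w) - K)) as [N2 HN2]; [lra|].
  specialize (HN (max N N2) (Nat.le_max_l _ _)).
  specialize (HN2 (max N N2) (Nat.le_max_r _ _)).
  assert (E : (l - w = - (u (max N N2) - l) + (u (max N N2) - w))%C) by ring.
  pose proof (Cmod_triangle (- (u (max N N2) - l)) (u (max N N2) - w)) as T.
  rewrite <- E, Cmod_opp in T. lra.
Qed.

Lemma sumC_S (a : nat -> C) n : sum_n a (S n) = (sum_n a n + a (S n))%C.
Proof. rewrite sum_Sn. reflexivity. Qed.

Lemma ser_tail (u : nat -> C) L c q : is_series (V:=C_NormedModule) u L -> 0 <= q < 1 ->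
  (forall n, Cmod (u n) <= c * q^n) ->
  forall M, Cmod (L - sum_n u M) <= c * q^(S M) / (1 - q).
Proof.
  intros HL Hq Hu M.
  assert (Hc : 0 <= c) by (specialize (Hu 0%nat); simpl in Hu; pose proof (Cmod_ge_0 (u 0%nat)); lra).
  apply lim_le with (u := sum_n u); [exact HL|].
  exists M; intros n Hn.
  replace n with (M + (n - M))%nat by lia. generalize (n - M)%nat as j. intro j.
  assert (H : Cmod (sum_n u (M + j) - sum_n u M) <= c * q^(S M) * (1 - q^j) / (1 - q)).
  { induction j.
    - rewrite Nat.add_0_r. replace (sum_n u M - sum_n u M)%C with (RtoC 0) by ring.
      rewrite Cmod_0. simpl. replace (c * (q * q ^ M) * (1 - 1) / (1 - q)) with 0 by (field; lra). lra.
    - replace (M + S j)%nat with (S (M + j)) by lia. rewrite sumC_S.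
      replace (sum_n u (M + j) + u (S (M + j)) - sum_n u M)%C
        with ((sum_n u (M + j) - sum_n u M) + u (S (M + j)))%C by ring.
      eapply Rle_trans; [apply Cmod_triangle|].
      specialize (Hu (S (M + j))).
      replace (c * q ^ S M * (1 - q ^ S j) / (1 - q)) with
        (c * q ^ S M * (1 - q ^ j) / (1 - q) + c * q ^ S (M + j)).
      + lra.
      + replace (S (M + j)) with (S M + j)%nat by lia. rewrite pow_add. simpl. field. lra. }
  eapply Rle_trans; [exact H|].
  apply Rmult_le_compat_r; [apply Rlt_le, Rinv_0_lt_compat; lra|].
  rewrite <- (Rmult_1_r (c * q ^ S M)) at 2.
  apply Rmult_le_compat_l; [apply Rmult_le_pos; [exact Hc| apply pow_le; lra]|].
  pose proof (pow_le q j (proj1 Hq)). lra.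
Qed.

Lemma sumR_S (a : nat -> R) n : sum_n a (S n) = sum_n a n + a (S n).
Proof. rewrite sum_Sn. reflexivity. Qed.

Lemma sumR_ge0 (a : nat -> R) N : (forall k, 0 <= a k) -> 0 <= sum_n a N.
Proof. intro H. induction N; [rewrite sum_O; apply H| rewrite sumR_S; specialize (H (S N)); lra]. Qed.

Lemma sumR_term (a : nat -> R) N n : (forall k, 0 <= a k) -> (n <= N)%nat -> a n <= sum_n a N.
Proof.
  intros H Hn. induction N.
  - replace n with 0%nat by lia. rewrite sum_O. lra.
  - rewrite sumR_S. destruct (Nat.eq_dec n (S N)) as [->|ne].
    + pose proof (sumR_ge0 a N H). lra.
    + specialize (IHN ltac:(lia)). specialize (H (S N)). lra.
Qed.

Lemma ser_bounded (u : nat -> C) L : is_series (V:=C_NormedModule) u L -> exists B, forall n, Cmod (u n) <= B.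
Proof.
  intros HL. destruct (lim_C_inv (sum_n u) L HL 1 Rlt_0_1) as [N HN].
  exists (2 + sum_n (fun k => Cmod (u k)) N). intro n.
  assert (Hs := sumR_ge0 (fun k => Cmod (u k)) N (fun k => Cmod_ge_0 _)).
  destruct (Compare_dec.le_lt_dec n N) as [h|h].
  - pose proof (sumR_term (fun k => Cmod (u k)) N n (fun k => Cmod_ge_0 _) h). simpl in H. lra.
  - destruct n as [|m]; [lia|].
    assert (E : u (S m) = ((sum_n u (S m) - L) - (sum_n u m - L))%C) by (rewrite sumC_S; ring).
    rewrite E. eapply Rle_trans; [apply Cmod_triangle|]. rewrite Cmod_opp.
    pose proof (HN (S m) ltac:(lia)). pose proof (HN m ltac:(lia)). lra.
Qed.

Definition ex (t : R) : C := (cos t, sin t).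

Lemma ex_mult a b : (ex a * ex b)%C = ex (a + b).
Proof. unfold ex, Cmult; simpl. rewrite cos_plus, sin_plus. f_equal; ring. Qed.

Lemma ex_pow a n : (ex a ^ n)%C = ex (INR n * a).
Proof.
  induction n.
  - simpl. unfold ex. rewrite Rmult_0_l, cos_0, sin_0. reflexivity.
  - rewrite Cpow_S, IHn, ex_mult, S_INR. f_equal. ring.
Qed.

Lemma ex_conj a : (ex a * Cconj (ex a))%C = 1.
Proof.
  unfold ex, Cmult, Cconj; simpl. pose proof (sin2_cos2 a). unfold Rsqr in H.
  unfold RtoC. f_equal; lra.
Qed.

Lemma Cmod_ex a : Cmod (ex a) = 1.
Proof.
  unfold Cmod, ex; simpl. pose proof (sin2_cos2 a). unfold Rsqr in H.
  replace (cos a * (cos a * 1) + sin a * (sin a * 1)) with 1 by lra. apply sqrt_1.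
Qed.

Lemma ex_neq1 a : 0 < a < 2 * PI -> ex a <> 1.
Proof.
  intros Ha E. unfold ex, RtoC in E. injection E as Ec Es.
  destruct (sin_eq_O_2PI_0 a ltac:(lra) ltac:(lra) Es) as [h|[h|h]]; try lra.
  subst. rewrite cos_PI in Ec. lra.
Qed.

Lemma geomC (q : C) n : ((q - 1) * sum_n (fun k => q ^ k) n = q ^ (S n) - 1)%C.
Proof.
  induction n.
  - rewrite sum_O. simpl. ring.
  - rewrite sumC_S. replace ((q - 1) * (sum_n (fun k => q ^ k) n + q ^ S n))%C
      with ((q - 1) * sum_n (fun k => q ^ k) n + (q - 1) * q ^ S n)%C by ring.
    rewrite IHn. rewrite (Cpow_S q (S n)). ring.
Qed.

Lemma Cmult_cancel (a s : C) : a <> RtoC 0 -> (a * s)%C = RtoC 0 -> s = RtoC 0.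
Proof.
  intros Ha H. transitivity (/ a * (a * s))%C; [field; exact Ha|]. rewrite H. ring.
Qed.

Definition wk (N' k : nat) : C := ex (2 * PI * INR k / INR (S N')).

Lemma orth N' j : (1 <= j <= N')%nat -> sum_n (fun k => (wk N' k) ^ j)%C N' = RtoC 0.
Proof.
  intros Hj.
  set (q := ex (2 * PI * INR j / INR (S N'))).
  assert (HN : 0 < INR (S N')) by (apply lt_0_INR; lia).
  assert (E : forall k, ((wk N' k) ^ j = q ^ k)%C).
  { intro k. unfold wk, q. rewrite !ex_pow. f_equal. field. lra. }
  rewrite (sum_n_ext _ _ N' E).
  assert (Hq1 : q <> 1).
  { apply ex_neq1. assert (1 <= INR j) by (apply (le_INR 1); lia).
    assert (INR j < INR (S N')) by (apply lt_INR; lia). pose proof PI_RGT_0.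
    split.
    - apply Rdiv_lt_0_compat; [|lra]. nra.
    - apply (Rmult_lt_reg_r (INR (S N'))); [lra|]. unfold Rdiv. rewrite Rmult_assoc, Rinv_l; nra. }
  assert (HqN : (q ^ S N')%C = 1).
  { unfold q. rewrite ex_pow.
    replace (INR (S N') * (2 * PI * INR j / INR (S N'))) with (INR j * (2 * PI)) by (field; lra).
    rewrite <- ex_pow. replace (ex (2 * PI)) with (RtoC 1).
    - apply Cpow_1_l.
    - unfold ex. rewrite cos_2PI, sin_2PI. reflexivity. }
  pose proof (geomC q N') as G. rewrite HqN in G.
  replace (RtoC 1 - 1)%C with (RtoC 0) in G by ring.
  assert (Hq : (q - 1)%C <> 0%C).
  { intro h. apply Hq1. replace q with ((q - 1) + 1)%C by ring. rewrite h. ring. }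
  exact (Cmult_cancel _ _ Hq G).
Qed.

Lemma sum_conj (b : nat -> C) n : sum_n (fun k => Cconj (b k)) n = Cconj (sum_n b n).
Proof.
  induction n; [rewrite !sum_O; reflexivity|]. rewrite !sumC_S, IHn, Cplus_conj. reflexivity.
Qed.

Lemma orth_conj N' j : (1 <= j <= N')%nat -> sum_n (fun k => (Cconj (wk N' k)) ^ j)%C N' = RtoC 0.
Proof.
  intros Hj. rewrite (sum_n_ext _ (fun k => Cconj ((wk N' k) ^ j)%C)).
  - rewrite sum_conj, orth by exact Hj. unfold Cconj; simpl. unfold RtoC. f_equal. ring.
  - intro k. symmetry. apply Cpow_conj.
Qed.

Section Fin.
Variables x0 x1 x2 : C.
Definition Pp (z : C) : C := (x0 + x1 * z + x2 * z ^ 2)%C.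
Definition Pb (z : C) : C := (Cconj x0 + Cconj x1 * Cconj z + Cconj x2 * (Cconj z) ^ 2)%C.
Definition A0 : C := (x0 * Cconj x0 + x1 * Cconj x1 + x2 * Cconj x2)%C.
Definition A1 : C := (x1 * Cconj x0 + x2 * Cconj x1)%C.
Definition A2 : C := (x2 * Cconj x0)%C.
Definition B1 : C := (x0 * Cconj x1 + x1 * Cconj x2)%C.
Definition B2 : C := (x0 * Cconj x2)%C.

Lemma Pb_conj z : Pb z = Cconj (Pp z).
Proof. unfold Pb, Pp. rewrite !Cplus_conj, !Cmult_conj, Cpow_conj. reflexivity. Qed.

Lemma PPb (w : C) : (w * Cconj w = 1)%C ->
  (Pp w * Pb w = A0 + A1 * w + A2 * w ^ 2 + B1 * Cconj w + B2 * (Cconj w) ^ 2)%C.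
Proof.
  intros H. unfold Pp, Pb, A0, A1, A2, B1, B2.
  assert (Hw : w <> RtoC 0) by (intro h; rewrite h in H; rewrite Cmult_0_l in H;
    injection H; lra).
  assert (E : Cconj w = (/ w)%C) by (rewrite <- (Cmult_1_l (/ w)%C), <- H; field; exact Hw).
  rewrite E. field. exact Hw.
Qed.

Lemma sum5 (n : nat) (c0 c1 c2 c3 c4 : C) (g1 g2 g3 g4 : nat -> C) :
  @eq C (sum_n (fun k => c0 + c1 * g1 k + c2 * g2 k + c3 * g3 k + c4 * g4 k)%C n)
  (INR (S n) * c0 + c1 * sum_n g1 n + c2 * sum_n g2 n + c3 * sum_n g3 n + c4 * sum_n g4 n)%C.
Proof.
  induction n.
  - rewrite !sum_O. simpl. replace (RtoC 1) with (RtoC 1) by reflexivity. ring.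
  - rewrite !sumC_S, IHn. rewrite (S_INR (S n)). rewrite RtoC_plus. ring.
Qed.

Lemma sum6 (n : nat) (c1 c2 c3 c4 c5 : C) (g1 g2 g3 g4 g5 : nat -> C) :
  @eq C (sum_n (fun k => c1 * g1 k + c2 * g2 k + c3 * g3 k + c4 * g4 k + c5 * g5 k)%C n)
  (c1 * sum_n g1 n + c2 * sum_n g2 n + c3 * sum_n g3 n + c4 * sum_n g4 n + c5 * sum_n g5 n)%C.
Proof.
  induction n.
  - rewrite !sum_O. ring.
  - rewrite !sumC_S, IHn. ring.
Qed.

Variable w : nat -> C.
Variable N' : nat.
Hypothesis Hw : forall k, (w k * Cconj (w k) = 1)%C.
Hypothesis Horth : forall j, (1 <= j <= N')%nat ->
  sum_n (fun k => (w k) ^ j)%C N' = RtoC 0 /\ sum_n (fun k => (Cconj (w k)) ^ j)%C N' = RtoC 0.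

Definition delta (m : nat) : C :=
  match m with 0 => A0 | 1 => B1 | 2 => B2 | _ => RtoC 0 end.

Lemma Im_val m : (m + 2 <= N')%nat ->
  @eq C (sum_n (fun k => (w k) ^ m * (Pp (w k) * Pb (w k)))%C N') (INR (S N') * delta m)%C.
Proof.
  intros Hm.
  destruct m as [|[|[|m']]].
  - rewrite (sum_n_ext _ (fun k => A0 + A1 * (w k) ^ 1 + A2 * (w k) ^ 2 + B1 * (Cconj (w k)) ^ 1
        + B2 * (Cconj (w k)) ^ 2)%C).
    + rewrite sum5. rewrite (proj1 (Horth 1 ltac:(lia))), (proj1 (Horth 2 ltac:(lia))),
        (proj2 (Horth 1 ltac:(lia))), (proj2 (Horth 2 ltac:(lia))). simpl. ring.
    + intro k. rewrite PPb by apply Hw. simpl. ring.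
  - rewrite (sum_n_ext _ (fun k => B1 + A0 * (w k) ^ 1 + A1 * (w k) ^ 2 + A2 * (w k) ^ 3
        + B2 * (Cconj (w k)) ^ 1)%C).
    + rewrite sum5. rewrite (proj1 (Horth 1 ltac:(lia))), (proj1 (Horth 2 ltac:(lia))),
        (proj1 (Horth 3 ltac:(lia))), (proj2 (Horth 1 ltac:(lia))). simpl. ring.
    + intro k. rewrite PPb by apply Hw. pose proof (Hw k) as H. simpl.
      transitivity (B1 * (w k * Cconj (w k)) + A0 * w k + A1 * (w k * w k) + A2 * (w k * (w k * w k))
        + B2 * (w k * Cconj (w k)) * Cconj (w k))%C; [ring|]. rewrite H. ring.
  - rewrite (sum_n_ext _ (fun k => B2 + A0 * (w k) ^ 2 + A1 * (w k) ^ 3 + A2 * (w k) ^ 4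
        + B1 * (w k) ^ 1)%C).
    + rewrite sum5. rewrite (proj1 (Horth 1 ltac:(lia))), (proj1 (Horth 2 ltac:(lia))),
        (proj1 (Horth 3 ltac:(lia))), (proj1 (Horth 4 ltac:(lia))). simpl. ring.
    + intro k. rewrite PPb by apply Hw. pose proof (Hw k) as H. simpl.
      transitivity (B2 * (w k * Cconj (w k)) * (w k * Cconj (w k)) + A0 * (w k * w k)
        + A1 * (w k * (w k * w k)) + A2 * (w k * (w k * (w k * w k)))
        + B1 * w k * (w k * Cconj (w k)))%C; [ring|]. rewrite H. ring.
  - rewrite (sum_n_ext _ (fun k => A0 * (w k) ^ (m' + 3) + A1 * (w k) ^ (m' + 4)
        + A2 * (w k) ^ (m' + 5) + B1 * (w k) ^ (m' + 2) + B2 * (w k) ^ (m' + 1))%C).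
    + rewrite sum6. rewrite (proj1 (Horth (m'+3) ltac:(lia))), (proj1 (Horth (m'+4) ltac:(lia))),
        (proj1 (Horth (m'+5) ltac:(lia))), (proj1 (Horth (m'+2) ltac:(lia))),
        (proj1 (Horth (m'+1) ltac:(lia))). simpl. ring.
    + intro k. rewrite PPb by apply Hw. pose proof (Hw k) as H.
      rewrite !Cpow_add_r. replace (S (S (S m'))) with (m' + 3)%nat by lia. rewrite Cpow_add_r.
      simpl.
      transitivity (A0 * ((w k)^m' * (w k * (w k * w k))) + A1 * ((w k)^m' * (w k * (w k * (w k * w k))))
        + A2 * ((w k)^m' * (w k * (w k * (w k * (w k * w k)))))
        + B1 * ((w k)^m' * (w k * w k)) * (w k * Cconj (w k))
        + B2 * ((w k)^m' * w k) * (w k * Cconj (w k)) * (w k * Cconj (w k)))%C; [ring|].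
      rewrite H. ring.
Qed.

Definition T (b : nat -> C) (M : nat) (z : C) : C := sum_n (fun m => b m * z ^ m)%C M.

Lemma sumC_mult_l (a : C) (u : nat -> C) n :
  @eq C (sum_n (fun k => a * u k)%C n) (a * sum_n u n)%C.
Proof. induction n; [rewrite !sum_O; reflexivity| rewrite !sumC_S, IHn; ring]. Qed.

Lemma sumC_mult_r (a : C) (u : nat -> C) n :
  @eq C (sum_n (fun k => u k * a)%C n) (sum_n u n * a)%C.
Proof. induction n; [rewrite !sum_O; reflexivity| rewrite !sumC_S, IHn; ring]. Qed.

Lemma ident (b : nat -> C) M : (2 <= M)%nat -> (M + 2 <= N')%nat ->
  @eq C (sum_n (fun k => T b M (w k) * (Pp (w k) * Pb (w k)))%C N')
    (INR (S N') * (b 0%nat * A0 + b 1%nat * B1 + b 2%nat * B2))%C.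
Proof.
  intros HM HN.
  rewrite (sum_n_ext _ (fun k => sum_n (fun m => b m * ((w k) ^ m * (Pp (w k) * Pb (w k))))%C M)).
  2:{ intro k. unfold T. rewrite <- sumC_mult_r. apply sum_n_ext. intro m. change (@eq C (b m * w k ^ m * (Pp (w k) * Pb (w k)))%C (b m * (w k ^ m * (Pp (w k) * Pb (w k))))%C). ring. }
  rewrite (sum_n_switch (fun k m => b m * ((w k) ^ m * (Pp (w k) * Pb (w k))))%C).
  rewrite (sum_n_ext_loc _ (fun m => b m * (INR (S N') * delta m))%C).
  2:{ intros m Hm. rewrite sumC_mult_l, Im_val by lia. reflexivity. }
  clear HN. induction M as [|M IH]; [lia|].
  destruct (Nat.eq_dec M 1) as [->|ne].
  - rewrite !sumC_S, sum_O. cbn [delta]. ring.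
  - rewrite sumC_S, IH by lia. destruct M as [|[|M]]; [lia|lia|]. cbn [delta]. ring.
Qed.

Lemma Re_sum (u : nat -> C) n : Re (sum_n u n) = sum_n (fun k => Re (u k)) n.
Proof. induction n; [rewrite !sum_O; reflexivity| rewrite sumC_S, sumR_S, <- IHn; reflexivity]. Qed.

Lemma sumR_le (a b : nat -> R) n : (forall k, (k <= n)%nat -> a k <= b k) -> sum_n a n <= sum_n b n.
Proof.
  intros H. induction n; [rewrite !sum_O; apply H; lia|].
  rewrite !sumR_S. specialize (IHn (fun k hk => H k ltac:(lia))). specialize (H (S n) ltac:(lia)). lra.
Qed.

Lemma sumR_mult_l (c : R) (a : nat -> R) n : @eq R (sum_n (fun k => c * a k) n) (c * sum_n a n).
Proof. induction n; [rewrite !sum_O; reflexivity| rewrite !sumR_S, IHn; ring]. Qed.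

Lemma Re_mult_real (z : C) (r : R) : Re (z * RtoC r)%C = Re z * r.
Proof. destruct z; unfold Re, Cmult; simpl. ring. Qed.

Lemma PPb_real z : (Pp z * Pb z)%C = RtoC (Cmod (Pp z) ^ 2).
Proof. rewrite Pb_conj, Cmod2_conj. reflexivity. Qed.

Lemma fin (b : nat -> C) M eps : (2 <= M)%nat -> (M + 2 <= N')%nat ->
  (forall k, (k <= N')%nat -> - eps <= Re (T b M (w k))) ->
  - eps * Re A0 <= Re (b 0%nat * A0 + b 1%nat * B1 + b 2%nat * B2)%C.
Proof.
  intros HM HN Hk.
  pose proof (ident b M HM HN) as I1.
  assert (I0 := Im_val 0 ltac:(lia)).
  apply (f_equal Re) in I1. apply (f_equal Re) in I0.
  rewrite Re_sum in I1, I0.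
  assert (HNp : 0 < INR (S N')) by (apply lt_0_INR; lia).
  assert (E1 : Re (INR (S N') * (b 0%nat * A0 + b 1%nat * B1 + b 2%nat * B2))%C =
     INR (S N') * Re (b 0%nat * A0 + b 1%nat * B1 + b 2%nat * B2)%C) by (simpl; ring).
  assert (E0 : Re (INR (S N') * delta 0)%C = INR (S N') * Re A0) by (simpl; ring).
  rewrite E1 in I1. rewrite E0 in I0.
  assert (L : sum_n (fun k => - eps * Re ((w k) ^ 0 * (Pp (w k) * Pb (w k)))%C) N' <=
              sum_n (fun k => Re (T b M (w k) * (Pp (w k) * Pb (w k)))%C) N').
  { apply sumR_le. intros k hk. rewrite !PPb_real, !Re_mult_real. specialize (Hk k hk).
    replace (Re (w k ^ 0)%C) with 1 by reflexivity.
    pose proof (pow2_ge_0 (Cmod (Pp (w k)))). nra. }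
  rewrite I1 in L.
  assert (L2 : sum_n (fun k => - eps * Re ((w k) ^ 0 * (Pp (w k) * Pb (w k)))%C) N' =
     - eps * sum_n (fun k => Re ((w k) ^ 0 * (Pp (w k) * Pb (w k)))%C) N').
  { apply sumR_mult_l. }
  rewrite L2, I0 in L. nra.
Qed.
End Fin.

Lemma deriv_eps (f : C -> C) z l :
  is_derive (K := C_AbsRing) (V := C_NormedModule) f z l ->
  forall eps, 0 < eps -> exists del, 0 < del /\ forall y, Cmod (y - z) < del ->
    Cmod (f y - f z - (y - z) * l) <= eps * Cmod (y - z).
Proof.
  intros [_ Hd] eps Heps.
  assert (Hz : is_filter_lim (locally z) z) by (intros P HP; exact HP).
  destruct (Hd z Hz (mkposreal eps Heps)) as [del Hdel].
  exists del. split; [apply cond_pos|]. intros y Hy.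
  specialize (Hdel y Hy).
  exact Hdel.
Qed.

Lemma deriv_of_eps (f : C -> C) z l :
  (forall eps, 0 < eps -> exists del, 0 < del /\ forall y, Cmod (y - z) < del ->
    Cmod (f y - f z - (y - z) * l) <= eps * Cmod (y - z)) ->
  is_derive (K := C_AbsRing) (V := C_NormedModule) f z l.
Proof.
  intros H. split; [apply is_linear_scal_l|].
  intros x Hx. apply (is_filter_lim_locally_unique (K:=C_AbsRing) (V:=AbsRing_NormedModule C_AbsRing)) in Hx. subst x.
  intros eps. destruct (H eps (cond_pos eps)) as [del [Hdel Hy]].
  exists (mkposreal del Hdel).
  intros y Hb. specialize (Hy y Hb). exact Hy.
Qed.

Lemma Re_lin (u v l : C) (h : R) : Re (u - v - RtoC h * l)%C = Re u - Re v - h * Re l.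
Proof. destruct u, v, l; unfold Re; simpl. ring. Qed.

Lemma real_deriv (f fp : C -> C) (z1 d : C) (t : R) :
  d <> RtoC 0 ->
  is_derive (K := C_AbsRing) (V := C_NormedModule) f (z1 + RtoC t * d)%C (fp (z1 + RtoC t * d)%C) ->
  derivable_pt_lim (fun s => Re (f (z1 + RtoC s * d)%C / d)%C) t (Re (fp (z1 + RtoC t * d)%C)).
Proof.
  intros Hd Hf eps Heps.
  assert (Hdm : 0 < Cmod d) by (apply Cmod_gt_0; exact Hd).
  destruct (deriv_eps _ _ _ Hf (eps / 2) ltac:(lra)) as [del [Hdel Hy]].
  exists (mkposreal (del / Cmod d) (Rdiv_lt_0_compat _ _ Hdel Hdm)).
  intros h Hh0 Hh. change (Rabs h < del / Cmod d) in Hh.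
  set (z := (z1 + RtoC t * d)%C).
  set (y := (z1 + RtoC (t + h) * d)%C).
  assert (Eyz : (y - z = RtoC h * d)%C) by (unfold y, z; rewrite RtoC_plus; ring).
  assert (Hyz : Cmod (y - z) < del).
  { rewrite Eyz, Cmod_mult, Cmod_R.
    apply (Rmult_lt_compat_r (Cmod d)) in Hh; [|lra].
    unfold Rdiv in Hh. rewrite Rmult_assoc, Rinv_l, Rmult_1_r in Hh; lra. }
  specialize (Hy y Hyz). change (Cmod (f y - f z - (y - z) * fp z) <= eps / 2 * Cmod (y - z)) in Hy. rewrite Eyz in Hy.
  assert (E : (Re (f y / d)%C - Re (f z / d)%C) / h - Re (fp z) =
     Re ((f y - f z - RtoC h * d * fp z) / d)%C / h).
  { replace ((f y - f z - RtoC h * d * fp z) / d)%C with (f y / d - f z / d - RtoC h * fp z)%C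
      by (field; exact Hd).
    rewrite Re_lin. field. exact Hh0. }
  change (Rabs ((Re (f y / d)%C - Re (f z / d)%C) / h - Re (fp z)) < eps). rewrite E.
  assert (Hh' : 0 < Rabs h) by (apply Rabs_pos_lt; exact Hh0).
  unfold Rdiv. rewrite Rabs_mult, Rabs_inv.
  eapply Rle_lt_trans.
  - apply Rmult_le_compat_r; [apply Rlt_le, Rinv_0_lt_compat; lra|]. apply re_le_Cmod.
  - rewrite Cmod_div by exact Hd. rewrite Cmod_mult, Cmod_R in Hy.
    apply (Rmult_lt_reg_r (Rabs h)); [lra|]. rewrite Rmult_assoc, Rinv_l, Rmult_1_r by lra.
    apply (Rmult_lt_reg_r (Cmod d)); [lra|]. unfold Rdiv. rewrite Rmult_assoc, Rinv_l, Rmult_1_r by lra.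
    assert (0 < eps * Rabs h * Cmod d) by (repeat apply Rmult_lt_0_compat; lra). lra.
Qed.

Lemma disk_seg (z1 z2 : C) (t : R) : in_disk z1 -> in_disk z2 -> 0 <= t <= 1 ->
  in_disk (z1 + RtoC t * (z2 - z1))%C.
Proof.
  unfold in_disk. intros H1 H2 Ht.
  replace (z1 + RtoC t * (z2 - z1))%C with (RtoC (1 - t) * z1 + RtoC t * z2)%C
    by (rewrite RtoC_minus; ring).
  eapply Rle_lt_trans; [apply Cmod_triangle|]. rewrite !Cmod_mult, !Cmod_R.
  rewrite !Rabs_pos_eq by lra. destruct (Req_dec t 1) as [->|ne]; [lra|]. assert (0 < (1-t)*(1 - Cmod z1)) by (apply Rmult_lt_0_compat; lra). assert (0 <= t*(1 - Cmod z2)) by (apply Rmult_le_pos; lra). lra.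
Qed.

Lemma segment (f : C -> C) (z1 z2 : C) : in_class_R f -> in_disk z1 -> in_disk z2 -> z1 <> z2 ->
  0 < Re ((f z2 - f z1) / (z2 - z1))%C.
Proof.
  intros [fp [Hh [_ [_ Hpos]]]] H1 H2 Hne.
  set (d := (z2 - z1)%C).
  assert (Hd : d <> RtoC 0) by (unfold d; intro h; apply Hne;
    replace z2 with ((z2 - z1) + z1)%C by ring; rewrite h; ring).
  set (phi := fun s => Re (f (z1 + RtoC s * d)%C / d)%C).
  assert (Hder : forall s, 0 <= s <= 1 -> derivable_pt_lim phi s (Re (fp (z1 + RtoC s * d)%C))).
  { intros s Hs. apply real_deriv; [exact Hd|]. apply Hh. apply disk_seg; assumption. }
  destruct (MVT_gen phi 0 1 (fun s => Re (fp (z1 + RtoC s * d)%C))) as [c [Hc E]].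
  - intros x Hx. rewrite Rmin_left, Rmax_right in Hx by lra.
    apply is_derive_Reals. apply Hder. lra.
  - intros x Hx. rewrite Rmin_left, Rmax_right in Hx by lra.
    apply derivable_continuous_pt. exists (Re (fp (z1 + RtoC x * d)%C)). apply Hder. lra.
  - rewrite Rmin_left, Rmax_right in Hc by lra.
    assert (Hp := Hpos _ (disk_seg z1 z2 c H1 H2 Hc)). fold d in Hp.
    unfold phi in E.
    replace (z1 + RtoC 1 * d)%C with z2 in E by (unfold d; ring).
    replace (z1 + RtoC 0 * d)%C with z1 in E by ring.
    replace ((f z2 - f z1) / d)%C with (f z2 / d - f z1 / d - RtoC 0 * RtoC 0)%C by (field; exact Hd).
    rewrite Re_lin. nra.
Qed.

Lemma quad1 (p q u v : R) :
  Re (A0 (1, 0) ((-p)%R, (-q)%R) (0, 0) + 2 * (p, q) * B1 (1, 0) ((-p)%R, (-q)%R) (0, 0)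
      + 3 * (u, v) * B2 (1, 0) (0, 0))%C = 1 - (p^2 + q^2).
Proof. unfold A0, B1, B2, Cconj, Cmult, Cplus, Re; simpl. ring. Qed.

Lemma quad2 (p q u v m d1 d2 : R) : d1 = 3 * u - 2 * (p^2 - q^2) -> d2 = 3 * v - 4 * p * q ->
  Re (A0 ((-m)%R, 0%R) ((p * m - p * d1 - q * d2)%R, (q * m - p * d2 + q * d1)%R) (d1, d2)
     + 2 * (p, q) * B1 ((-m)%R, 0%R) ((p * m - p * d1 - q * d2)%R, (q * m - p * d2 + q * d1)%R) (d1, d2)
     + 3 * (u, v) * B2 ((-m)%R, 0%R) (d1, d2))%C =
  (1 - (p^2 + q^2)) * (m^2 + d1^2 + d2^2) - m * (d1^2 + d2^2).
Proof. intros -> ->. unfold A0, B1, B2, Cconj, Cmult, Cplus, Re; simpl. ring. Qed.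

Lemma final_ineq (a2 a3 : C) :
  (forall x0 x1 x2, 0 <= Re (A0 x0 x1 x2 + 2 * a2 * B1 x0 x1 x2 + 3 * a3 * B2 x0 x2)%C) ->
  Cmod a2 <= 1 /\ Cmod (a3 - RtoC (3/2) * (a2 * a2)) <= 5/6.
Proof.
  intros H. destruct a2 as [p q], a3 as [u v].
  pose proof (H (1, 0) ((-p)%R, (-q)%R) (0, 0)) as H1. rewrite quad1 in H1.
  assert (Ha2 : Cmod (p, q) ^ 2 = p^2 + q^2) by (rewrite Cmod2_alt; reflexivity).
  pose proof (Cmod_ge_0 (p, q)) as Hc0.
  split; [nra|].
  set (d1 := 3 * u - 2 * (p^2 - q^2)). set (d2 := 3 * v - 4 * p * q).
  set (m := Cmod (d1, d2)).
  assert (Hm2 : m ^ 2 = d1^2 + d2^2) by (unfold m; rewrite Cmod2_alt; reflexivity).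
  assert (Hm0 : 0 <= m) by apply Cmod_ge_0.
  pose proof (H ((-m)%R, 0%R) ((p * m - p * d1 - q * d2)%R, (q * m - p * d2 + q * d1)%R) (d1, d2)) as H2.
  rewrite (quad2 p q u v m d1 d2 eq_refl eq_refl) in H2.
  assert (Hm : m <= 2 * (1 - (p^2 + q^2))).
  { destruct (Req_dec m 0) as [->|ne]; [nra|].
    rewrite <- Hm2 in H2. assert (0 < m) by lra.
    assert (0 <= m^2 * (2 * (1 - (p^2 + q^2)) - m)) by nra.
    assert (0 < m^2) by nra. nra. }
  assert (E : ((u, v) - RtoC (3/2) * ((p, q) * (p, q)) =
               RtoC (1/3) * (d1, d2) - RtoC (5/6) * ((p, q) * (p, q)))%C).
  { unfold d1, d2, Cmult, Cminus, Cplus, Copp, RtoC; simpl. f_equal; field. }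
  rewrite E. unfold Cminus. eapply Rle_trans; [apply Cmod_triangle|].
  rewrite Cmod_opp, !Cmod_mult, !Cmod_R. fold m.
  rewrite !Rabs_pos_eq by lra. nra.
Qed.

Definition tm (a : nat -> C) (z : C) (n : nat) : C :=
  if (n <? 2)%nat then RtoC 0 else (a n * pow_n z n)%C.

Lemma coef_bound f a rho : has_coeffs f a -> 0 < rho < 1 ->
  exists B, 0 <= B /\ forall n, (2 <= n)%nat -> Cmod (a n) * rho ^ n <= B.
Proof.
  intros Hf Hr.
  assert (Hd : in_disk (RtoC rho)) by (unfold in_disk; rewrite Cmod_R, Rabs_pos_eq; lra).
  destruct (ser_bounded _ _ (Hf _ Hd)) as [B HB].
  exists B. split.
  - specialize (HB 0%nat). simpl in HB. pose proof (Cmod_ge_0 (RtoC 0)). lra.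
  - intros n Hn. specialize (HB n). replace (n <? 2)%nat with false in HB
      by (symmetry; apply Nat.ltb_ge; lia).
    rewrite Cmod_mult, powC, Cmod_pow, Cmod_R, Rabs_pos_eq in HB by lra. exact HB.
Qed.

Lemma tm_bound a B rho r z : 0 < rho -> 0 <= B ->
  (forall n, (2 <= n)%nat -> Cmod (a n) * rho ^ n <= B) -> 0 <= r -> Cmod z <= r ->
  forall n, Cmod (tm a z n) <= B * (r / rho) ^ n.
Proof.
  intros Hrho HB Ha Hr Hz n. unfold tm.
  assert (Hp : 0 <= (r / rho) ^ n) by (apply pow_le; apply Rdiv_le_0_compat; lra).
  destruct (n <? 2)%nat eqn:E.
  - rewrite Cmod_0. nra.
  - apply Nat.ltb_ge in E. rewrite Cmod_mult, powC, Cmod_pow.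
    assert (Hzn : Cmod z ^ n <= r ^ n) by (apply pow_incr; split; [apply Cmod_ge_0|exact Hz]).
    assert (Er : r ^ n = rho ^ n * (r / rho) ^ n) by (rewrite <- Rpow_mult_distr; f_equal; field; lra).
    specialize (Ha n E).
    pose proof (Cmod_ge_0 (a n)).
    eapply Rle_trans; [apply Rmult_le_compat_l; [lra|exact Hzn]|].
    rewrite Er, <- Rmult_assoc. apply Rmult_le_compat_r; lra.
Qed.

Lemma tail f a B rho r z M : has_coeffs f a -> 0 < rho -> 0 <= B ->
  (forall n, (2 <= n)%nat -> Cmod (a n) * rho ^ n <= B) -> 0 <= r < rho -> Cmod z <= r -> in_disk z ->
  Cmod ((f z - z) - sum_n (tm a z) M) <= B * (r / rho) ^ (S M) / (1 - r / rho).
Proof.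
  intros Hf Hrho HB Ha Hr Hz Hd.
  apply ser_tail.
  - exact (Hf z Hd).
  - split; [apply Rdiv_le_0_compat; lra|]. apply (Rmult_lt_reg_r rho); [lra|].
    unfold Rdiv; rewrite Rmult_assoc, Rinv_l, Rmult_1_r, Rmult_1_l; lra.
  - apply tm_bound; lra || assumption.
Qed.

Definition sdiff (r r' : R) (n : nat) : R := (r' ^ n - r ^ n) / (r' - r).

Definition beta (a : nat -> C) (r r' : R) (m : nat) : C :=
  match m with 0 => RtoC 1 | S m' => (a (S (S m')) * RtoC (sdiff r r' (S (S m'))))%C end.

Lemma poly_eq a r r' w M : r <> r' -> w <> RtoC 0 ->
  (((RtoC r' * w + sum_n (tm a (RtoC r' * w)%C) (S M))
    - (RtoC r * w + sum_n (tm a (RtoC r * w)%C) (S M))) / (RtoC (r' - r) * w))%C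
  = T (beta a r r') M w.
Proof.
  intros Hr Hw. assert (Hrr : RtoC (r' - r) <> RtoC 0) by (intro h; injection h; lra).
  induction M.
  - rewrite !sumC_S, !sum_O. unfold T. rewrite sum_O.
    replace (tm a (RtoC r' * w)%C 0) with (RtoC 0) by reflexivity.
    replace (tm a (RtoC r' * w)%C 1) with (RtoC 0) by reflexivity.
    replace (tm a (RtoC r * w)%C 0) with (RtoC 0) by reflexivity.
    replace (tm a (RtoC r * w)%C 1) with (RtoC 0) by reflexivity.
    simpl beta. rewrite RtoC_minus. simpl. field. split; [exact Hw|]. rewrite <- RtoC_minus. exact Hrr.
  - unfold T in *. rewrite (sumC_S _ (S M)), (sumC_S _ (S M)), (sumC_S (fun m => beta a r r' m * w ^ m)%C M).
    rewrite <- IHM.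
    replace (tm a (RtoC r' * w)%C (S (S M))) with (a (S (S M)) * pow_n (RtoC r' * w)%C (S (S M)))%C by reflexivity.
    replace (tm a (RtoC r * w)%C (S (S M))) with (a (S (S M)) * pow_n (RtoC r * w)%C (S (S M)))%C by reflexivity.
    rewrite !powC, !Cpow_mult_l, <- !RtoC_pow. simpl beta. unfold sdiff.
    rewrite RtoC_div, !RtoC_minus.
    + rewrite (Cpow_S w (S M)). rewrite RtoC_minus in Hrr. field. split; [exact Hrr| exact Hw].
    + lra.
Qed.

Lemma lim_nonneg (q K c : R) : 0 <= q < 1 -> (forall M, (2 <= M)%nat -> - K * q ^ M <= c) -> 0 <= c.
Proof.
  intros Hq H. destruct (Rle_or_lt 0 c) as [h|h]; [exact h|]. exfalso.
  assert (Hy : 0 < - c / (Rabs K + 1)) by (apply Rdiv_lt_0_compat; [lra| pose proof (Rabs_pos K); lra]).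
  destruct (pow_lt_1_zero q ltac:(rewrite Rabs_pos_eq; lra) _ Hy) as [N HN].
  specialize (HN (max N 2) (Nat.le_max_l _ _)). specialize (H (max N 2) (Nat.le_max_r _ _)).
  set (t := q ^ max N 2) in *.
  assert (Ht : 0 <= t) by (apply pow_le; lra). rewrite Rabs_pos_eq in HN by exact Ht.
  pose proof (Rabs_pos K). pose proof (Rle_abs K). pose proof (Rle_abs (-K)). rewrite Rabs_Ropp in *.
  assert (t * (Rabs K + 1) < - c).
  { apply (Rmult_lt_compat_r (Rabs K + 1)) in HN; [|lra].
    unfold Rdiv in HN. rewrite Rmult_assoc, Rinv_l, Rmult_1_r in HN; lra. }
  nra.
Qed.

Lemma Re_minus (u v : C) : Re (u - v)%C = Re u - Re v.
Proof. destruct u, v; unfold Re; simpl. ring. Qed.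

Lemma carath f a r r' x0 x1 x2 : in_class_R f -> has_coeffs f a -> 0 < r < r' -> r' < 1 ->
  0 <= Re (beta a r r' 0 * A0 x0 x1 x2 + beta a r r' 1 * B1 x0 x1 x2 + beta a r r' 2 * B2 x0 x2)%C.
Proof.
  intros Hf Ha Hr Hr1.
  set (rho := (1 + r') / 2).
  destruct (coef_bound f a rho Ha ltac:(unfold rho; lra)) as [B [HB Hab]].
  set (q := r' / rho).
  assert (Hq : 0 <= q < 1).
  { unfold q, rho. split; [apply Rdiv_le_0_compat; lra|].
    apply (Rmult_lt_reg_r ((1 + r') / 2)); [lra|]. field_simplify; lra. }
  assert (HA0 : 0 <= Re (A0 x0 x1 x2)).
  { unfold A0. rewrite <- !Cmod2_conj. simpl. nra. }
  apply (lim_nonneg q (2 * B * q ^ 2 / ((1 - q) * (r' - r)) * Re (A0 x0 x1 x2))); [exact Hq|].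
  intros M HM.
  set (eps := 2 * (B * q ^ S (S M) / (1 - q)) / (r' - r)).
  replace (- (2 * B * q ^ 2 / ((1 - q) * (r' - r)) * Re (A0 x0 x1 x2)) * q ^ M)
    with (- eps * Re (A0 x0 x1 x2))
    by (unfold eps; replace (S (S M)) with (2 + M)%nat by lia; rewrite pow_add; field; lra).
  assert (Hw : forall k, (wk (M + 2) k * Cconj (wk (M + 2) k))%C = RtoC 1) by (intro k; apply ex_conj).
  assert (Ho : forall j, (1 <= j <= M + 2)%nat ->
    sum_n (fun k => (wk (M + 2) k ^ j)%C) (M + 2) = RtoC 0 /\
    sum_n (fun k => (Cconj (wk (M + 2) k) ^ j)%C) (M + 2) = RtoC 0)
    by (intros j Hj; split; [apply orth; exact Hj| apply orth_conj; exact Hj]).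
  apply (fin x0 x1 x2 (wk (M + 2)) (M + 2) Hw Ho (beta a r r') M eps HM ltac:(lia)).
  - intros k _. set (w := wk (M + 2) k).
    assert (Hw1 : Cmod w = 1) by apply Cmod_ex.
    assert (Hw0 : w <> RtoC 0) by (intro h; rewrite h, Cmod_0 in Hw1; lra).
    set (z1 := (RtoC r * w)%C). set (z2 := (RtoC r' * w)%C).
    assert (Hz1 : Cmod z1 = r) by (unfold z1; rewrite Cmod_mult, Cmod_R, Hw1, Rabs_pos_eq; lra).
    assert (Hz2 : Cmod z2 = r') by (unfold z2; rewrite Cmod_mult, Cmod_R, Hw1, Rabs_pos_eq; lra).
    assert (Hd1 : in_disk z1) by (unfold in_disk; lra).
    assert (Hd2 : in_disk z2) by (unfold in_disk; lra).
    assert (E21 : (z2 - z1 = RtoC (r' - r) * w)%C) by (unfold z1, z2; rewrite RtoC_minus; ring).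
    assert (Hne : z1 <> z2).
    { intro h. rewrite h in E21. replace (z2 - z2)%C with (RtoC 0) in E21 by ring.
      apply (f_equal Cmod) in E21. rewrite Cmod_0, Cmod_mult, Cmod_R, Hw1, Rabs_pos_eq in E21; lra. }
    pose proof (segment f z1 z2 Hf Hd1 Hd2 Hne) as Hseg.
    rewrite <- (poly_eq a r r' w M) by (lra || exact Hw0).
    fold z1 z2.
    set (Y2 := (z2 + sum_n (tm a z2) (S M))%C). set (Y1 := (z1 + sum_n (tm a z1) (S M))%C).
    assert (T2 : Cmod (f z2 - Y2) <= B * q ^ S (S M) / (1 - q)).
    { replace (f z2 - Y2)%C with ((f z2 - z2) - sum_n (tm a z2) (S M))%C by (unfold Y2; ring).
      apply tail; try assumption; unfold rho in *; lra. }
    assert (T1 : Cmod (f z1 - Y1) <= B * q ^ S (S M) / (1 - q)).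
    { replace (f z1 - Y1)%C with ((f z1 - z1) - sum_n (tm a z1) (S M))%C by (unfold Y1; ring).
      apply (tail f a B rho r' z1 (S M)); try assumption; unfold rho in *; lra. }
    rewrite <- E21.
    set (P := ((Y2 - Y1) / (z2 - z1))%C). set (Dv := ((f z2 - f z1) / (z2 - z1))%C) in Hseg.
    assert (Hzz : (z2 - z1)%C <> RtoC 0).
    { intro h. apply Hne. replace z2 with ((z2 - z1) + z1)%C by ring. rewrite h. ring. }
    assert (EDP : (Dv - P = ((f z2 - Y2) - (f z1 - Y1)) / (z2 - z1))%C) by (unfold Dv, P; field; exact Hzz).
    assert (HDP : Cmod (Dv - P) <= eps).
    { rewrite EDP, Cmod_div by exact Hzz. rewrite E21, Cmod_mult, Cmod_R, Hw1, Rabs_pos_eq by lra.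
      rewrite Rmult_1_r.
      unfold eps. unfold Rdiv at 1 3. apply Rmult_le_compat_r; [apply Rlt_le, Rinv_0_lt_compat; lra|].
      replace (f z2 - Y2 - (f z1 - Y1))%C with ((f z2 - Y2) + - (f z1 - Y1))%C by ring. eapply Rle_trans; [apply Cmod_triangle|]. rewrite Cmod_opp. unfold Rdiv in T1, T2. lra. }
    pose proof (re_le_Cmod (Dv - P)%C) as Hre. rewrite Re_minus in Hre.
    pose proof (Rle_abs (Re Dv - Re P)). lra.
Qed.

Lemma radial_lim (c b d : R) : (forall eta, 0 < eta <= 1/4 -> 0 <= c - eta * b + eta ^ 2 * d) -> 0 <= c.
Proof.
  intros H. destruct (Rle_or_lt 0 c) as [h|h]; [exact h|]. exfalso.
  set (K := Rabs b + Rabs d + 1).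
  assert (HK : 1 <= K) by (unfold K; pose proof (Rabs_pos b); pose proof (Rabs_pos d); lra).
  set (eta := Rmin (1/4) (- c / (2 * K))).
  assert (He1 : eta <= 1/4) by apply Rmin_l.
  assert (He2 : eta <= - c / (2 * K)) by apply Rmin_r.
  assert (He0 : 0 < eta) by (apply Rmin_glb_lt; [lra| apply Rdiv_lt_0_compat; lra]).
  specialize (H eta ltac:(lra)).
  assert (eta * K <= - c / 2).
  { apply (Rmult_le_compat_r K) in He2; [|lra]. replace (- c / (2 * K) * K) with (- c / 2) in He2 by (field; lra). lra. }
  pose proof (Rle_abs (-b)) as Hb. pose proof (Rle_abs d) as Hd. rewrite Rabs_Ropp in Hb.
  pose proof (Rabs_pos d).
  assert (- eta * b <= eta * Rabs b) by nra.
  assert (eta ^ 2 * d <= eta ^ 2 * Rabs d) by (apply Rmult_le_compat_l; nra).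
  assert (eta ^ 2 * Rabs d <= eta * Rabs d) by (apply Rmult_le_compat_r; [lra|]; simpl; nra).
  unfold K in *. lra.
Qed.

Lemma Re_comb1 (A a a' Bv Bv' : C) (s s' : R) :
  Re (RtoC 1 * A + a * RtoC s * Bv + a' * RtoC s' * Bv')%C = Re A + s * Re (a * Bv)%C + s' * Re (a' * Bv')%C.
Proof. destruct A, a, a', Bv, Bv'; unfold Re; simpl. ring. Qed.

Lemma Re_comb2 (A a a' Bv Bv' : C) :
  Re (A + 2 * a * Bv + 3 * a' * Bv')%C = Re A + 2 * Re (a * Bv)%C + 3 * Re (a' * Bv')%C.
Proof. destruct A, a, a', Bv, Bv'; unfold Re; simpl. ring. Qed.

Lemma upper f a : in_class_R f -> has_coeffs f a ->
  Cmod (Gamma1 a) <= 1/2 /\ Cmod (Gamma2 a) <= 5/12.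
Proof.
  intros Hf Ha.
  assert (key : forall x0 x1 x2, 0 <= Re (A0 x0 x1 x2 + 2 * a 2%nat * B1 x0 x1 x2 + 3 * a 3%nat * B2 x0 x2)%C).
  { intros x0 x1 x2. rewrite Re_comb2.
    apply (radial_lim _ (3 * Re (a 2%nat * B1 x0 x1 x2)%C + 9 * Re (a 3%nat * B2 x0 x2)%C)
                        (7 * Re (a 3%nat * B2 x0 x2)%C)).
    intros eta He.
    pose proof (carath f a (1 - 2 * eta) (1 - eta) x0 x1 x2 Hf Ha ltac:(lra) ltac:(lra)) as Hc.
    simpl beta in Hc. rewrite Re_comb1 in Hc. unfold sdiff in Hc.
    replace ((((1 - eta) ^ 2 - (1 - 2 * eta) ^ 2) / (1 - eta - (1 - 2 * eta)))) with (2 - 3 * eta) in Hc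
      by (field; lra).
    replace ((((1 - eta) ^ 3 - (1 - 2 * eta) ^ 3) / (1 - eta - (1 - 2 * eta)))) with (3 - 9 * eta + 7 * eta ^ 2) in Hc
      by (field; lra).
    nra. }
  destruct (final_ineq (a 2%nat) (a 3%nat) key) as [H1 H2].
  unfold Gamma1, Gamma2. rewrite !Cmod_mult, !Cmod_R, Rabs_Ropp, Rabs_pos_eq by lra.
  split; [lra|]. unfold Cminus. unfold Cminus in H2. lra.
Qed.

Lemma geom_series (z : C) : Cmod z < 1 ->
  is_series (V := C_NormedModule) (fun n => (z ^ n)%C) (/ (1 - z))%C.
Proof.
  intros Hz.
  assert (Hz1 : (1 - z)%C <> RtoC 0).
  { intro h. assert (z = RtoC 1) by (replace z with (1 - (1 - z))%C by ring; rewrite h; ring).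
    subst. rewrite Cmod_1 in Hz. lra. }
  assert (Hm : 0 < Cmod (1 - z)) by (apply Cmod_gt_0; exact Hz1).
  apply lim_C. intros eps Heps.
  destruct (pow_lt_1_zero (Cmod z) ltac:(rewrite Rabs_pos_eq; [lra|apply Cmod_ge_0]) (eps * Cmod (1 - z))
    ltac:(apply Rmult_lt_0_compat; lra)) as [N HN].
  exists N. intros n Hn.
  assert (E : (sum_n (fun k => (z ^ k)%C) n - / (1 - z) = - z ^ (S n) / (1 - z))%C).
  { pose proof (geomC z n) as G.
    assert (Hz1' : (z - 1)%C <> RtoC 0) by (intro h; apply Hz1; replace (1 - z)%C with (- (z - 1))%C by ring; rewrite h; ring).
    transitivity ((((z - 1) * sum_n (fun k => (z ^ k)%C) n) + 1 - 1) / (z - 1) - / (1 - z))%C.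
    - field. split; assumption.
    - rewrite G. field. split; assumption. }
  match goal with |- Cmod ?X < _ => assert (E' : X = (- z ^ (S n) / (1 - z))%C) by exact E; rewrite E' end.
  unfold Cdiv. rewrite Cmod_mult, Cmod_opp, Cmod_inv, Cmod_pow by exact Hz1.
  specialize (HN (S n) ltac:(lia)). rewrite Rabs_pos_eq in HN by (apply pow_le, Cmod_ge_0).
  apply (Rmult_lt_reg_r (Cmod (1 - z))); [lra|].
  rewrite Rmult_assoc, Rinv_l, Rmult_1_r by lra. exact HN.
Qed.

Lemma bernoulli (x : R) n : 0 <= x -> 1 + INR n * x <= (1 + x) ^ n.
Proof.
  intros Hx. induction n.
  - simpl. lra.
  - rewrite S_INR. simpl. pose proof (pos_INR n).
    assert (0 <= INR n * x * x) by (apply Rmult_le_pos; [apply Rmult_le_pos|]; lra). nra.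
Qed.

Lemma n_pow_bound (rho sig : R) n : 0 < rho < sig ->
  INR n * rho ^ n <= sig ^ n / (sig / rho - 1).
Proof.
  intros H.
  assert (Hx : 0 < sig / rho - 1).
  { apply (Rplus_lt_reg_r 1). ring_simplify. apply (Rmult_lt_reg_r rho); [lra|].
    unfold Rdiv; rewrite Rmult_assoc, Rinv_l, Rmult_1_r; lra. }
  pose proof (bernoulli (sig / rho - 1) n ltac:(lra)) as Hb.
  replace (1 + (sig / rho - 1)) with (sig / rho) in Hb by ring.
  assert (Hr : 0 < rho ^ n) by (apply pow_lt; lra).
  assert (E : sig ^ n = rho ^ n * (sig / rho) ^ n) by (rewrite <- Rpow_mult_distr; f_equal; field; lra).
  rewrite E. apply (Rmult_le_reg_r (sig / rho - 1)); [lra|].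
  assert (E2 : rho ^ n * (sig / rho) ^ n / (sig / rho - 1) * (sig / rho - 1) = rho ^ n * (sig / rho) ^ n)
    by (field; lra).
  rewrite E2. pose proof (pos_INR n).
  assert (INR n * (sig / rho - 1) <= (sig / rho) ^ n) by lra.
  replace (INR n * rho ^ n * (sig / rho - 1)) with (rho ^ n * (INR n * (sig / rho - 1))) by ring.
  apply Rmult_le_compat_l; lra.
Qed.

Definition En (z h : C) (n : nat) : C := ((z + h) ^ n - z ^ n - RtoC (INR n) * h * z ^ (pred n))%C.

Lemma En_bound (z h : C) (rho : R) : 0 < rho -> Cmod z <= rho -> Cmod (z + h) <= rho ->
  forall n, rho ^ 2 * Cmod (En z h n) <= INR n ^ 2 * Cmod h ^ 2 * rho ^ n.
Proof.
  intros Hr Hz Hzh n. induction n.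
  - unfold En. simpl. replace (1 - 1 - RtoC 0 * h * 1)%C with (RtoC 0) by ring. rewrite Cmod_0. lra.
  - assert (Erec : En z h (S n) = ((z + h) * En z h n + RtoC (INR n) * h ^ 2 * z ^ (pred n))%C).
    { unfold En. destruct n.
      - simpl. ring.
      - replace (pred (S (S n))) with (S n) by reflexivity. replace (pred (S n)) with n by reflexivity.
        rewrite !Cpow_S, !S_INR, !RtoC_plus. ring. }
    rewrite Erec.
    pose proof (Cmod_ge_0 (En z h n)). pose proof (Cmod_ge_0 h). pose proof (pos_INR n).
    assert (Hzp : Cmod z ^ pred n <= rho ^ pred n) by (apply pow_incr; split; [apply Cmod_ge_0|exact Hz]).
    assert (T1 : Cmod ((z + h) * En z h n)%C <= rho * Cmod (En z h n))
      by (rewrite Cmod_mult; apply Rmult_le_compat_r; lra).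
    assert (T2 : rho ^ 2 * Cmod (RtoC (INR n) * h ^ 2 * z ^ (pred n))%C <= INR n * Cmod h ^ 2 * rho ^ (S n)).
    { rewrite !Cmod_mult, Cmod_R, !Cmod_pow, Rabs_pos_eq by lra.
      destruct n.
      - simpl. lra.
      - replace (pred (S n)) with n in * by reflexivity.
        replace (rho ^ S (S n)) with (rho ^ 2 * rho ^ n) by (simpl; ring).
        assert (0 <= Cmod h ^ 2) by (apply pow_le; lra). assert (0 <= rho ^ 2) by (apply pow_le; lra).
        assert (0 <= INR (S n) * Cmod h ^ 2) by (apply Rmult_le_pos; lra).
        replace (rho ^ 2 * (INR (S n) * Cmod h ^ 2 * Cmod z ^ n)) with
          ((rho ^ 2 * (INR (S n) * Cmod h ^ 2)) * Cmod z ^ n) by ring.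
        replace (INR (S n) * Cmod h ^ 2 * (rho ^ 2 * rho ^ n)) with
          ((rho ^ 2 * (INR (S n) * Cmod h ^ 2)) * rho ^ n) by ring.
        apply Rmult_le_compat_l; [apply Rmult_le_pos; lra| exact Hzp]. }
    pose proof (Cmod_triangle ((z + h) * En z h n)%C (RtoC (INR n) * h ^ 2 * z ^ (pred n))%C) as Tr.
    assert (Hr2 : 0 <= rho ^ 2) by (apply pow_le; lra).
    assert (S1 : rho ^ 2 * Cmod ((z + h) * En z h n + RtoC (INR n) * h ^ 2 * z ^ pred n)%C <=
       rho * (rho ^ 2 * Cmod (En z h n)) + INR n * Cmod h ^ 2 * rho ^ S n).
    { assert (rho ^ 2 * Cmod ((z + h) * En z h n)%C <= rho ^ 2 * (rho * Cmod (En z h n)))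
        by (apply Rmult_le_compat_l; lra). nra. }
    eapply Rle_trans; [exact S1|].
    rewrite S_INR. simpl pow. simpl pow in IHn.
    assert (0 <= Cmod h * (Cmod h * 1)) by nra.
    assert (rho * (rho * (rho * 1) * Cmod (En z h n)) <= rho * (INR n * (INR n * 1) * (Cmod h * (Cmod h * 1)) * rho ^ n))
      by (apply Rmult_le_compat_l; lra).
    assert (0 <= INR n * (Cmod h * (Cmod h * 1)) * (rho * rho ^ n)).
    { apply Rmult_le_pos; [apply Rmult_le_pos; lra|]. apply Rmult_le_pos; [lra| apply pow_le; lra]. }
    set (X := Cmod h * (Cmod h * 1)) in *. set (Y := rho * rho ^ n) in *.
    assert (HXY : 0 <= X * Y) by (unfold Y; apply Rmult_le_pos; [lra| apply Rmult_le_pos; [lra| apply pow_le; lra]]).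
    replace (rho * (INR n * (INR n * 1) * X * rho ^ n)) with (INR n * INR n * (X * Y)) in H3 by (unfold Y; ring).
    assert (0 <= (INR n + 1) * (X * Y)) by (apply Rmult_le_pos; lra).
    replace ((INR n + 1) * ((INR n + 1) * 1) * X * Y) with (INR n * INR n * (X * Y) + INR n * (X * Y) + (INR n + 1) * (X * Y)) by ring.
    replace (INR n * X * Y) with (INR n * (X * Y)) by ring.
    lra.
Qed.

Definition cex (n : nat) : R := if (n <? 2)%nat then 0 else 2 / INR n.
Definition aex (n : nat) : C := RtoC (cex n).
Definition Sex (z : C) : C :=
  epsilon (inhabits (RtoC 0)) (fun l => is_series (V := C_NormedModule) (tm aex z) l).
Definition fex (z : C) : C := (z + Sex z)%C.
Definition fpex (z : C) : C := ((1 + z) / (1 - z))%C.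

Lemma ltb2_false n : (2 <= n)%nat -> (n <? 2)%nat = false.
Proof. intro H. apply Nat.ltb_ge. exact H. Qed.

Lemma cex_bound n : (2 <= n)%nat -> 0 <= cex n <= 1 /\ cex n * INR n = 2.
Proof.
  intro H. unfold cex. rewrite ltb2_false by exact H.
  assert (2 <= INR n) by (apply (le_INR 2); exact H).
  split; [split|].
  - apply Rdiv_le_0_compat; lra.
  - apply (Rmult_le_reg_r (INR n)); [lra|]. unfold Rdiv. rewrite Rmult_assoc, Rinv_l; lra.
  - field. lra.
Qed.

Lemma Sex_spec z : Cmod z < 1 -> is_series (V := C_NormedModule) (tm aex z) (Sex z).
Proof.
  intros Hz. unfold Sex. apply epsilon_spec.
  assert (Hg : ex_series (fun n => 2 * Cmod z ^ n)).
  { exists (2 * / (1 - Cmod z)).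
    apply (is_series_scal_l (K := R_AbsRing) (V := R_NormedModule) 2 (fun n => Cmod z ^ n)).
    apply is_series_geom. rewrite Rabs_pos_eq by apply Cmod_ge_0. exact Hz. }
  apply (@ex_series_le C_AbsRing C_CompleteNormedModule (tm aex z) (fun n => 2 * Cmod z ^ n)); [|exact Hg].
  intro n. change (Cmod (tm aex z n) <= 2 * Cmod z ^ n).
  pose proof (pow_le (Cmod z) n (Cmod_ge_0 z)).
  unfold tm. destruct (n <? 2)%nat eqn:E.
  - rewrite Cmod_0. lra.
  - apply Nat.ltb_ge in E. destruct (cex_bound n E) as [[h1 h2] _].
    rewrite Cmod_mult, powC, Cmod_pow. unfold aex. rewrite Cmod_R, Rabs_pos_eq by lra. nra.
Qed.

Lemma sum_zero (u : nat -> C) n : (forall k, u k = RtoC 0) -> @eq C (sum_n u n) (RtoC 0).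
Proof.
  intros H. induction n; [rewrite sum_O; apply H|]. rewrite sumC_S, IHn, H. ring.
Qed.

Lemma Sex_0 : Sex (RtoC 0) = RtoC 0.
Proof.
  assert (H1 := Sex_spec (RtoC 0) ltac:(rewrite Cmod_0; lra)).
  assert (Hz : forall n, tm aex (RtoC 0) n = RtoC 0).
  { intro n. unfold tm. destruct (n <? 2)%nat eqn:E; [reflexivity|].
    apply Nat.ltb_ge in E. destruct n as [|n]; [lia|]. rewrite powC, Cpow_S. ring. }
  assert (H2 : is_series (V := C_NormedModule) (tm aex (RtoC 0)) (RtoC 0)).
  { apply lim_C. intros eps Heps. exists 0%nat. intros n _.
    match goal with |- Cmod ?X < _ => assert (E' : X = (RtoC 0 - RtoC 0)%C) by (exact (f_equal (fun t => (t - RtoC 0)%C) (sum_zero _ n Hz))); rewrite E' end.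
    replace (RtoC 0 - RtoC 0)%C with (RtoC 0) by ring. rewrite Cmod_0. exact Heps. }
  exact (filterlim_locally_unique _ _ _ H1 H2).
Qed.

Definition gt (z : C) (n : nat) : C := if (n <? 2)%nat then RtoC 0 else (RtoC 2 * z ^ (pred n))%C.

Lemma is_series_eqv (a : nat -> C) (l l' : C) : l = l' ->
  is_series (V := C_NormedModule) a l -> is_series (V := C_NormedModule) a l'.
Proof. intros ->; auto. Qed.

Lemma gt_series z : Cmod z < 1 -> is_series (V := C_NormedModule) (gt z) (RtoC 2 * z * / (1 - z))%C.
Proof.
  intros Hz. apply (is_series_decr_n (gt z) 2 _ ltac:(lia)).
  assert (E : @eq C (plus (RtoC 2 * z * / (1 - z))%C (opp (sum_n (gt z) (pred 2))))
                    (scal (RtoC 2 * z)%C (/ (1 - z))%C)).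
  { simpl pred. rewrite sum_Sn, sum_O. unfold gt. simpl (0 <? 2)%nat. simpl (1 <? 2)%nat.
    change (plus (RtoC 0) (RtoC 0)) with (RtoC 0 + RtoC 0)%C.
    change (@eq C ((RtoC 2 * z * / (1 - z)) + - (RtoC 0 + RtoC 0))%C ((RtoC 2 * z) * / (1 - z))%C). ring. }
  refine (is_series_eqv _ _ _ _ _). { symmetry. exact E. }
  apply (is_series_ext (fun n => scal (RtoC 2 * z)%C (z ^ n)%C)).
  - intro n. unfold gt. simpl (2 + n <? 2)%nat. simpl pred.
    change (@eq C ((RtoC 2 * z) * z ^ n)%C (RtoC 2 * z ^ (S n))%C). rewrite Cpow_S. ring.
  - exact (is_series_scal_l (K := C_AbsRing) (V := C_NormedModule) (RtoC 2 * z)%C _ _ (geom_series z Hz)).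
Qed.

Lemma v_term z h n : (2 <= n)%nat ->
  (tm aex (z + h)%C n - tm aex z n - h * gt z n = aex n * En z h n)%C.
Proof.
  intros Hn. unfold tm, gt. rewrite !ltb2_false by exact Hn. rewrite !powC. unfold En, aex.
  destruct (cex_bound n Hn) as [_ Hc].
  assert (HI : RtoC (INR n) <> RtoC 0) by (intro e; injection e; assert (2 <= INR n) by (apply (le_INR 2); exact Hn); lra).
  assert (E2 : RtoC 2 = (RtoC (cex n) * RtoC (INR n))%C) by (rewrite <- RtoC_mult, Hc; reflexivity).
  rewrite E2. rewrite (powC z n). ring.
Qed.

Lemma S_deriv_bound z : Cmod z < 1 -> exists K, 0 < K /\ exists eta, 0 < eta /\
  forall h, Cmod h < eta -> Cmod (Sex (z + h) - Sex z - h * (RtoC 2 * z * / (1 - z)))%C <= K * Cmod h ^ 2.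
Proof.
  intros Hz. set (m := Cmod z) in *. pose proof (Cmod_ge_0 z) as Hm0. fold m in Hm0.
  set (rho := (1 + m) / 2). set (sig := (1 + rho) / 2). set (x := sig / rho - 1).
  assert (Hrho : 1/2 <= rho < 1) by (unfold rho; lra).
  assert (Hsig : rho < sig < 1) by (unfold sig; lra).
  assert (Hx : 0 < x).
  { unfold x. apply (Rplus_lt_reg_r 1). ring_simplify. apply (Rmult_lt_reg_r rho); [lra|].
    unfold Rdiv; rewrite Rmult_assoc, Rinv_l, Rmult_1_r; lra. }
  assert (Hr2 : 0 < rho ^ 2) by (apply pow_lt; lra).
  exists (2 * sig / (rho ^ 2 * x * (1 - sig))). split.
  { apply Rdiv_lt_0_compat; [lra|]. apply Rmult_lt_0_compat; [apply Rmult_lt_0_compat|]; lra. }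
  exists ((1 - m) / 2). split; [lra|].
  intros h Hh.
  assert (Hzh : Cmod (z + h)%C <= rho).
  { eapply Rle_trans; [apply Cmod_triangle|]. fold m. unfold rho. lra. }
  assert (Hzh1 : Cmod (z + h)%C < 1) by lra.
  pose proof (Sex_spec _ Hzh1) as Hs1. pose proof (Sex_spec _ Hz) as Hs0.
  pose proof (gt_series _ Hz) as Hg.
  set (v := fun n => (tm aex (z + h)%C n - tm aex z n - h * gt z n)%C).
  assert (Hv : is_series (V := C_NormedModule) v (Sex (z + h) - Sex z - h * (RtoC 2 * z * / (1 - z)))%C).
  { exact (is_series_minus _ _ _ _ (is_series_minus _ _ _ _ Hs1 Hs0)
             (is_series_scal_l (K := C_AbsRing) (V := C_NormedModule) h _ _ Hg)). }
  set (c := 2 * Cmod h ^ 2 / (rho ^ 2 * x)).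
  assert (Hterm : forall n, Cmod (v n) <= c * sig ^ n).
  { intro n. assert (Hc0 : 0 <= c * sig ^ n).
    { apply Rmult_le_pos; [|apply pow_le; lra]. unfold c. apply Rdiv_le_0_compat;
        [apply Rmult_le_pos; [lra| apply pow_le, Cmod_ge_0]| apply Rmult_lt_0_compat; lra]. }
    destruct (Compare_dec.lt_dec n 2) as [hn|hn].
    - assert (v n = RtoC 0).
      { unfold v, tm, gt. replace (n <? 2)%nat with true by (symmetry; apply Nat.ltb_lt; exact hn). ring. }
      rewrite H, Cmod_0. exact Hc0.
    - unfold v. rewrite v_term by lia. unfold aex. rewrite Cmod_mult, Cmod_R.
      destruct (cex_bound n ltac:(lia)) as [[hc1 hc2] hc3]. rewrite Rabs_pos_eq by lra.
      pose proof (En_bound z h rho ltac:(lra) ltac:(fold m; unfold rho; lra) Hzh n) as HE.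
      pose proof (n_pow_bound rho sig n ltac:(lra)) as Hnp. fold x in Hnp.
      assert (HIn : 2 <= INR n) by (apply (le_INR 2); lia).
      (* cex n * Cmod En <= cex n * n^2 |h|^2 rho^n / rho^2 = 2 n |h|^2 rho^n / rho^2 *)
      assert (S1 : cex n * Cmod (En z h n) <= 2 * Cmod h ^ 2 / rho ^ 2 * (INR n * rho ^ n)).
      { apply (Rmult_le_reg_l (rho ^ 2)); [lra|].
        replace (rho ^ 2 * (2 * Cmod h ^ 2 / rho ^ 2 * (INR n * rho ^ n)))
          with (cex n * INR n * (INR n * Cmod h ^ 2 * rho ^ n)) by (rewrite hc3; field; lra).
        replace (rho ^ 2 * (cex n * Cmod (En z h n))) with (cex n * (rho ^ 2 * Cmod (En z h n))) by ring.
        replace (cex n * INR n * (INR n * Cmod h ^ 2 * rho ^ n)) with (cex n * (INR n ^ 2 * Cmod h ^ 2 * rho ^ n)) by ring.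
        apply Rmult_le_compat_l; lra. }
      eapply Rle_trans; [exact S1|].
      unfold c. assert (0 <= 2 * Cmod h ^ 2 / rho ^ 2) by (apply Rdiv_le_0_compat; [apply Rmult_le_pos; [lra| apply pow_le, Cmod_ge_0]|lra]).
      replace (2 * Cmod h ^ 2 / (rho ^ 2 * x) * sig ^ n) with (2 * Cmod h ^ 2 / rho ^ 2 * (sig ^ n / x)) by (field; lra).
      apply Rmult_le_compat_l; assumption. }
  pose proof (ser_tail v _ c sig Hv ltac:(lra) Hterm 0%nat) as HT.
  assert (Hv0 : v 0%nat = RtoC 0) by (unfold v, tm, gt; simpl; ring).
  rewrite sum_O, Hv0 in HT.
  replace (Sex (z + h) - Sex z - h * (RtoC 2 * z * / (1 - z)) - RtoC 0)%C
    with (Sex (z + h) - Sex z - h * (RtoC 2 * z * / (1 - z)))%C in HT by ring.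
  eapply Rle_trans; [exact HT|]. unfold c. simpl pow. right. field. repeat split; lra.
Qed.

Lemma one_minus_nz z : Cmod z < 1 -> (1 - z)%C <> RtoC 0.
Proof.
  intros Hz h. assert (z = RtoC 1) by (replace z with (1 - (1 - z))%C by ring; rewrite h; ring).
  subst. rewrite Cmod_1 in Hz. lra.
Qed.

Lemma fex_deriv z : Cmod z < 1 -> is_derive (K := C_AbsRing) (V := C_NormedModule) fex z (fpex z).
Proof.
  intros Hz. apply deriv_of_eps. intros eps Heps.
  destruct (S_deriv_bound z Hz) as [K [HK [eta [Heta Hb]]]].
  exists (Rmin eta (eps / K)). split.
  { apply Rmin_glb_lt; [lra| apply Rdiv_lt_0_compat; lra]. }
  intros y Hy.
  assert (Hy1 : Cmod (y - z) < eta) by (eapply Rlt_le_trans; [exact Hy| apply Rmin_l]).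
  assert (Hy2 : Cmod (y - z) <= eps / K) by (left; eapply Rlt_le_trans; [exact Hy| apply Rmin_r]).
  specialize (Hb (y - z)%C Hy1).
  replace (z + (y - z))%C with y in Hb by ring.
  assert (E : (fex y - fex z - (y - z) * fpex z = Sex y - Sex z - (y - z) * (RtoC 2 * z * / (1 - z)))%C).
  { unfold fex, fpex. field. exact (one_minus_nz z Hz). }
  rewrite E. eapply Rle_trans; [exact Hb|].
  pose proof (Cmod_ge_0 (y - z)%C).
  assert (K * Cmod (y - z) <= eps).
  { apply (Rmult_le_compat_l K) in Hy2; [|lra]. replace (K * (eps / K)) with eps in Hy2 by (field; lra). lra. }
  simpl. nra.
Qed.

Lemma fpex_pos z : Cmod z < 1 -> 0 < Re (fpex z).
Proof.
  intros Hz. assert (Hz2 : Cmod z ^ 2 < 1) by (pose proof (Cmod_ge_0 z); nra).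
  rewrite Cmod2_alt in Hz2.
  pose proof (one_minus_nz z Hz) as Hnz.
  destruct z as [p q]. unfold Re, Im in *. simpl fst in *. simpl snd in *.
  assert (HD : 0 < (1 - p) ^ 2 + q ^ 2).
  { destruct (Req_dec q 0) as [->|nq].
    - assert (p <> 1) by (intro; subst; apply Hnz; unfold Cminus, Copp, Cplus, RtoC; simpl; f_equal; ring).
      assert (1 - p <> 0) by lra. pose proof (pow2_gt_0 (1-p)). nra.
    - assert (0 < q ^ 2) by (apply pow2_gt_0; exact nq). pose proof (pow2_ge_0 (1 - p)). lra. }
  unfold fpex, Cdiv, Cinv, Cmult, Cminus, Cplus, Copp, RtoC; simpl.
  match goal with |- 0 < ?X => replace X with ((1 - (p ^ 2 + q ^ 2)) / ((1 - p) ^ 2 + q ^ 2)) by (field; lra) end.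
  apply Rdiv_lt_0_compat; lra.
Qed.

Lemma fex_class : in_class_R fex.
Proof.
  exists fpex. split; [|split; [|split]].
  - intros z Hz. apply fex_deriv. exact Hz.
  - unfold fex. rewrite Sex_0. ring.
  - unfold fpex. field.
  - intros z Hz. apply fpex_pos. exact Hz.
Qed.

Lemma fex_coeffs : has_coeffs fex aex.
Proof.
  intros z Hz. apply (is_series_eqv _ (Sex z)).
  - unfold fex. ring.
  - exact (Sex_spec z Hz).
Qed.

Lemma aex2 : aex 2%nat = RtoC 1.
Proof. unfold aex, cex. simpl. f_equal. field. Qed.
Lemma aex3 : aex 3%nat = RtoC (2/3).
Proof. unfold aex, cex. simpl. f_equal. field. Qed.

Lemma fex_gammas : Cmod (Gamma1 aex) = 1/2 /\ Cmod (Gamma2 aex) = 5/12.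
Proof.
  unfold Gamma1, Gamma2. rewrite aex2, aex3. split.
  - rewrite Cmod_mult, !Cmod_R, Rabs_Ropp, !Rabs_pos_eq by lra. ring.
  - rewrite <- !RtoC_mult, <- RtoC_minus, <- RtoC_mult, Cmod_R.
    replace (- (1 / 2) * (2 / 3 - 3 / 2 * (1 * 1))) with (5/12) by field.
    apply Rabs_pos_eq. lra.
Qed.

Theorem mainTheorem6 :
  (forall (f : C -> C) (a : nat -> C),
      in_class_R f -> has_coeffs f a ->
      Cmod (Gamma1 a) <= 1/2 /\ Cmod (Gamma2 a) <= 5/12) /\
  (exists (f : C -> C) (a : nat -> C),
      in_class_R f /\ has_coeffs f a /\
      Cmod (Gamma1 a) = 1/2 /\ Cmod (Gamma2 a) = 5/12).
Proof.
  split.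
  - intros f a Hf Ha. exact (upper f a Hf Ha).
  - exists fex, aex. split; [exact fex_class|]. split; [exact fex_coeffs|]. exact fex_gammas.
Qed.
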